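(* Let $M:\mathbb S\to\mathbb Q_{>0}$ be a recursive positive rational supermartingale for the interval forecast $\{1/2\}$, let $y>0$ be a real number, and let $s\in\mathbb S$ be a situation such that $M(t)\le y$ for every prefix $t$ of $s$ (including $s$ itself and the empty string). Then there is a recursive path $\omega\in\Omega$ with $\omega_{1:|s|}=s$ and $M(\omega_{1:n})\le y$ for all $n\in\mathbb N_0$.
   Context: $\mathcal X=\{0,1\}$, $\Omega=\mathcal X^{\mathbb N}$ (paths), $\mathbb S=\bigcup_{n\ge0}\mathcal X^n$ (finite binary strings), $|s|$ the length, $\omega_{1:n}=(\omega_1,\dots,\omega_n)$. A process $M:\mathbb S\to\mathbb R$ is a supermartingale for $\{1/2\}$ if $\tfrac12M(s1)+\tfrac12M(s0)\le M(s)$ for all $s\in\mathbb S$. $M$ is recursive rational if $s\mapsto M(s)\in\mathbb Q$ is computable by a Turing machine. A path $\omega$ is recursive if $n\mapsto\omega_n$ is computable by a Turing machine. *)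

(* Defs.v *)
From HB Require Import structures.
From mathcomp Require Import all_boot all_order all_algebra.
From mathcomp Require Import reals.
Set Implicit Arguments. Unset Strict Implicit. Unset Printing Implicit Defensive.
Import Order.TTheory GRing.Theory Num.Theory.

(* Model of computation: partial (mu-)recursive functions on nat.      *)
(* By the Church-Turing thesis (equivalence of Turing machines and     *)
(* mu-recursive functions) this captures computable by a Turing         *)
(* machine.  Argument lists are untyped (arity-free).                 *)
Inductive prf : Type :=
| PZero : prf
| PSucc : prf
| PProj : nat -> prf
| PComp : prf -> list prf -> prf
| PPrec : prf -> prf -> prf
| PMin  : prf -> prf.

Inductive eval : prf -> list nat -> nat -> Prop :=
| ev_zero v : eval PZero v 0
| ev_succ x v : eval PSucc (x :: v) x.+1
| ev_proj i v : i < size v -> eval (PProj i) v (nth 0 v i)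
| ev_comp f gs v ws y : evals gs v ws -> eval f ws y -> eval (PComp f gs) v y
| ev_prec0 f g v y : eval f v y -> eval (PPrec f g) (0 :: v) y
| ev_precS f g n v z y :
    eval (PPrec f g) (n :: v) z -> eval g (n :: z :: v) y ->
    eval (PPrec f g) (n.+1 :: v) y
| ev_min f v n :
    eval f (n :: v) 0 ->
    (forall m, m < n -> exists k, eval f (m :: v) k.+1) ->
    eval (PMin f) v n
with evals : list prf -> list nat -> list nat -> Prop :=
| evs_nil v : evals [::] v [::]
| evs_cons g gs v y ys : eval g v y -> evals gs v ys -> evals (g :: gs) v (y :: ys).

Definition recursive_nat (f : nat -> nat) : Prop :=
  exists c : prf, forall n, eval c [:: n] (f n).

(* Finite binary strings S = seq bool (true = 1, false = 0);
   paths Omega = nat -> bool, with omega_{1:n} = [:: omega 0; ...; omega (n-1)]. *)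
Definition path_prefix (w : nat -> bool) (n : nat) : seq bool := mkseq w n.

Definition recursive_path (w : nat -> bool) : Prop :=
  recursive_nat (fun n => nat_of_bool (w n)).

(* A process S -> Q is recursive rational if computable, where strings and
   rationals are coded as naturals by the standard (computable) countType
   codings [pickle]. *)
Definition recursive_rat_process (M : seq bool -> rat) : Prop :=
  exists c : prf, forall s : seq bool, eval c [:: pickle s] (pickle (M s)).

Definition supermartingale_half (M : seq bool -> rat) : Prop :=
  forall s : seq bool,
    ((1/2) * M (rcons s true) + (1/2) * M (rcons s false) <= M s)%R.

(* Main.v *)
Require Import Defs.
From mathcomp Require Import all_boot all_order all_algebra.
From mathcomp Require Import reals.
From mathcomp Require Import zify lra.
Import Order.TTheory GRing.Theory Num.Theory.
Set Implicit Arguments. Unset Strict Implicit.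

Lemma evP i v y : i < size v -> nth 0 v i = y -> eval (PProj i) v y.
Proof. by move=> h <-; constructor. Qed.

Lemma evC1 f g v a y : eval g v a -> eval f [:: a] y -> eval (PComp f [:: g]) v y.
Proof. by move=> h1 h2; econstructor; [econstructor; [exact h1|constructor]|exact h2]. Qed.

Lemma evC2 f g1 g2 v a b y : eval g1 v a -> eval g2 v b -> eval f [:: a; b] y ->
  eval (PComp f [:: g1; g2]) v y.
Proof. by move=> h1 h2 h3; econstructor; [do 2 (econstructor; eauto); constructor|exact h3]. Qed.

Fixpoint CST n := if n is n'.+1 then PComp PSucc [:: CST n'] else PZero.
Lemma evCST n v : eval (CST n) v n.
Proof. elim: n => [|n IH] /=; first constructor. apply: evC1; [exact IH|constructor]. Qed.

Definition ADD := PPrec (PProj 0) (PComp PSucc [:: PProj 1]).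
Lemma evADD x y : eval ADD [:: x; y] (x + y).
Proof.
elim: x => [|x IH]; first by constructor; apply: evP.
rewrite addSn; econstructor; first exact IH.
by apply: evC1; [apply: evP|constructor].
Qed.

Definition MUL := PPrec PZero (PComp ADD [:: PProj 1; PProj 2]).
Lemma evMUL x y : eval MUL [:: x; y] (x * y).
Proof.
elim: x => [|x IH]; first by constructor; constructor.
rewrite mulSn addnC; econstructor; first exact IH.
by apply: evC2; [apply: evP|apply: evP|apply: evADD].
Qed.

Definition PRED := PPrec PZero (PProj 0).
Lemma evPRED x : eval PRED [:: x] x.-1.
Proof. elim: x => [|x IH]; first by constructor; constructor.
by econstructor; [exact IH|apply: evP]. Qed.

Definition SUBr := PPrec (PProj 0) (PComp PRED [:: PProj 1]).
Lemma evSUBr y x : eval SUBr [:: y; x] (x - y).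
Proof.
elim: y => [|y IH]; first by constructor; apply: evP => //; rewrite subn0.
econstructor; first exact IH.
by apply: evC1; [apply: evP|rewrite subnS; apply: evPRED].
Qed.

Definition SUB := PComp SUBr [:: PProj 1; PProj 0].
Lemma evSUB x y : eval SUB [:: x; y] (x - y).
Proof. by apply: evC2; [apply: evP|apply: evP|apply: evSUBr]. Qed.

Definition EXP2 := PPrec (CST 1) (PComp ADD [:: PProj 1; PProj 1]).
Lemma evEXP2 x : eval EXP2 [:: x] (2 ^ x).
Proof.
elim: x => [|x IH]; first by constructor; apply: evCST.
econstructor; first exact IH.
by apply: evC2; [apply: evP|apply: evP|rewrite expnS mul2n -addnn; apply: evADD].
Qed.

Definition LEB := PComp SUB [:: CST 1; SUB].
Lemma evLEB x y : eval LEB [:: x; y] (nat_of_bool (x <= y)).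
Proof.
apply: evC2; [apply: evCST|apply: evSUB|].
have -> : nat_of_bool (x <= y) = 1 - (x - y) by case: leqP => h /=; lia.
apply: evSUB.
Qed.

Definition BITSP := PComp LEB [:: PComp EXP2 [:: PProj 0]; PProj 1].
Definition BITS := PMin BITSP.
Lemma evBITS x m : x < 2 ^ m -> (forall m', m' < m -> 2 ^ m' <= x) ->
  eval BITS [:: x] m.
Proof.
move=> h1 h2; constructor.
  apply: evC2; [apply: evC1; [apply: evP => //|apply: evEXP2]|apply: evP => //|].
  by have := evLEB (2 ^ m) x; rewrite leqNgt h1.
move=> m' /h2 h; exists 0.
apply: evC2; [apply: evC1; [apply: evP => //|apply: evEXP2]|apply: evP => //|].
by have := evLEB (2 ^ m') x; rewrite h.
Qed.

Definition lenc := foldr (fun n m => n.+1 + m) 0.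

Lemma code_lt l : CodeSeq.code l < 2 ^ lenc l.
Proof.
elim: l => [|n r IH] //=.
rewrite expnD expnS; have := expn_gt0 2 n; nia.
Qed.

Lemma code_ge l : l != [::] -> 2 ^ (lenc l).-1 <= CodeSeq.code l.
Proof.
elim: l => [|n r IH] //= _.
rewrite /= expnD.
case: r IH => [|m r'] IH; first by rewrite /= muln1.
have := IH isT.
set X := lenc _; set C := CodeSeq.code _ => h.
have -> : X = X.-1.+1 by [].
rewrite expnS; have := expn_gt0 2 n; rewrite [_ * _.*2.+1]/=. nia.
Qed.

Lemma code_rcons l b : CodeSeq.code (rcons l b) = CodeSeq.code l + 2 ^ (lenc l + b).
Proof.
elim: l => [|n r IH]; first by rewrite /= muln1.
rewrite rcons_cons.
have cE : forall x r', CodeSeq.code (x :: r') = 2^x * (CodeSeq.code r').*2.+1 by [].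
have -> : lenc (n :: r) = (n + lenc r).+1 by [].
rewrite !cE IH expnS !expnD; nia.
Qed.

Lemma lenc_gt0 l : l != [::] -> 0 < lenc l.
Proof. by case: l. Qed.

Lemma evBITS_code l : eval BITS [:: CodeSeq.code l] (lenc l).
Proof.
apply: evBITS; first exact: code_lt.
move=> m' hm; have hl : l != [::] by case: l hm.
apply: leq_trans (code_ge hl); rewrite leq_exp2l //; lia.
Qed.

Definition RC := PComp ADD [:: PProj 0; PComp EXP2 [:: PComp ADD [:: PComp BITS [:: PProj 0]; PProj 1]]].

Lemma pickle_seqb (t : seq bool) : pickle t = CodeSeq.code (map nat_of_bool t).
Proof. reflexivity. Qed.

Lemma evRC (t : seq bool) (b : bool) : eval RC [:: pickle t; nat_of_bool b] (pickle (rcons t b)).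
Proof.
rewrite !pickle_seqb map_rcons code_rcons.
apply: evC2; [apply: evP => //| |apply: evADD].
apply: evC1; last apply: evEXP2.
apply: evC2; [apply: evC1; [apply: evP => //|apply: evBITS_code]|apply: evP => //|apply: evADD].
Qed.

Lemma evPRED' x y : y = x.-1 -> eval PRED [:: x] y.
Proof. by move=> ->; apply: evPRED. Qed.

Lemma evSUB' x y z : z = x - y -> eval SUB [:: x; y] z.
Proof. by move=> ->; apply: evSUB. Qed.

Definition HP := PComp PRED [:: BITS].
Definition AP := PComp PRED [:: PComp BITS [:: PComp SUB [:: PProj 0; PComp EXP2 [:: HP]]]].
Definition BP := PComp PRED [:: PComp SUB [:: HP; AP]].

Lemma evHP A B : eval HP [:: 2 ^ A * (2 * 2 ^ B + 1)] (A + B + 1).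
Proof.
apply: (@evC1 _ _ _ (A + B + 2)); last by apply: evPRED'; lia.
apply: evBITS.
  rewrite !expnD; have := expn_gt0 2 A; have := expn_gt0 2 B; nia.
move=> m' hm; apply: leq_trans (_ : 2 ^ (A + B + 1) <= _).
  by rewrite leq_exp2l //; lia.
rewrite !expnD; nia.
Qed.

Lemma evAP A B : eval AP [:: 2 ^ A * (2 * 2 ^ B + 1)] A.
Proof.
apply: (@evC1 _ _ _ A.+1); last by apply: evPRED.
apply: (@evC1 _ _ _ (2 ^ A)); last first.
  apply: evBITS; first by rewrite ltn_exp2l.
  by move=> m' hm; rewrite leq_exp2l.
apply: evC2; [apply: evP => //| |].
  by apply: evC1; [apply: evHP|apply: evEXP2].
apply: evSUB'; rewrite !expnD expn1; set a := 2 ^ A; set b := 2 ^ B; rewrite /=; nia.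
Qed.

Lemma evBP A B : eval BP [:: 2 ^ A * (2 * 2 ^ B + 1)] B.
Proof.
apply: (@evC1 _ _ _ B.+1); last by apply: evPRED.
apply: evC2; [apply: evHP|apply: evAP|].
apply: evSUB'; lia.
Qed.

Definition NUMF := PComp PRED [:: PComp BITS [:: PComp SUB [:: BITS; CST 2]]].
Lemma evNUMF k : eval NUMF [:: 3 * 2 ^ (2 ^ k)] k.
Proof.
apply: (@evC1 _ _ _ k.+1); last by apply: evPRED.
apply: (@evC1 _ _ _ (2 ^ k)); last first.
  apply: evBITS; first by rewrite ltn_exp2l.
  by move=> m' hm; rewrite leq_exp2l.
apply: evC2; [|apply: evCST|].
  apply: (@evBITS _ (2 ^ k + 2)).
    by rewrite expnD; have := expn_gt0 2 (2 ^ k); nia.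
  move=> m' hm; apply: leq_trans (_ : 2 ^ (2 ^ k + 1) <= _).
    by rewrite leq_exp2l //; lia.
  by rewrite expnD; nia.
apply: evSUB'; lia.
Qed.

Definition NUM := PComp NUMF [:: AP].
Definition DEN := PComp NUMF [:: BP].

Lemma pickle_rat (q : rat) : pickle q = 2 ^ (pickle (numq q)) * (2 * 2 ^ (pickle (denq q)) + 1).
Proof.
change (pickle q) with (CodeSeq.code [:: pickle (numq q); pickle (denq q)]).
rewrite /CodeSeq.code /= muln1 -mul2n addn1. by [].
Qed.

Lemma pickle_pos (k : nat) : pickle (Posz k) = 3 * 2 ^ (2 ^ k).
Proof.
change (pickle (Posz k)) with (CodeSeq.code [:: CodeSeq.code [:: k]; CodeSeq.code [::]]).
by rewrite /CodeSeq.code /= muln1 mulnC.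
Qed.

Lemma num_pos (q : rat) : (0 < q)%R -> exists n, numq q = Posz n.
Proof. rewrite -numq_gt0; case: (numq q) => n // _; by exists n. Qed.
Lemma den_pos (q : rat) : exists n, denq q = Posz n.
Proof. have := denq_gt0 q; case: (denq q) => n // _; by exists n. Qed.

Lemma evNUM (q : rat) n : numq q = Posz n -> eval NUM [:: pickle q] n.
Proof. by move=> hn; apply: evC1; [rewrite pickle_rat; apply: evAP|rewrite hn pickle_pos; apply: evNUMF]. Qed.
Lemma evDEN (q : rat) n : denq q = Posz n -> eval DEN [:: pickle q] n.
Proof. by move=> hn; apply: evC1; [rewrite pickle_rat; apply: evBP|rewrite hn pickle_pos; apply: evNUMF]. Qed.

Definition CMP := PComp LEB [:: PComp MUL [:: PComp NUM [:: PProj 0]; PComp DEN [:: PProj 1]];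
                               PComp MUL [:: PComp NUM [:: PProj 1]; PComp DEN [:: PProj 0]]].

Lemma evCMP (q1 q0 : rat) : (0 < q1)%R -> (0 < q0)%R ->
  eval CMP [:: pickle q1; pickle q0] (nat_of_bool (q1 <= q0)%R).
Proof.
move=> /num_pos [n1 hn1] /num_pos [n0 hn0].
have [d1 hd1] := den_pos q1; have [d0 hd0] := den_pos q0.
have -> : (q1 <= q0)%R = (n1 * d0 <= n0 * d1).
  by rewrite -[(q1 <= q0)%R]/(le_rat q1 q0) le_ratE hn1 hn0 hd1 hd0 -!PoszM lez_nat.
apply: evC2; last apply: evLEB.
  apply: evC2; last apply: evMUL.
    by apply: evC1; [apply: evP|apply: evNUM].
  by apply: evC1; [apply: evP|apply: evDEN].
apply: evC2; last apply: evMUL.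
  by apply: evC1; [apply: evP|apply: evNUM].
by apply: evC1; [apply: evP|apply: evDEN].
Qed.

Definition CHOOSE c := PComp CMP [:: PComp c [:: PComp RC [:: PProj 0; CST 1]];
                                     PComp c [:: PComp RC [:: PProj 0; CST 0]]].

Lemma evCHOOSE c (M : seq bool -> rat) (t : seq bool) :
  (forall s : seq bool, eval c [:: pickle s] (pickle (M s))) ->
  (forall t : seq bool, (0 < M t)%R) ->
  eval (CHOOSE c) [:: pickle t] (nat_of_bool (M (rcons t true) <= M (rcons t false))%R).
Proof.
move=> hc hpos.
apply: evC2; last by apply: evCMP.
  apply: evC1; last by apply: hc.
  by apply: evC2; [apply: evP|apply: (evCST 1)|apply: (evRC t true)].
apply: evC1; last by apply: hc.
by apply: evC2; [apply: evP|apply: (evCST 0)|apply: (evRC t false)].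
Qed.

Fixpoint SB (s : seq bool) : prf :=
  if s is b :: s' then PPrec (CST b) (PComp (SB s') [:: PProj 0]) else PZero.

Lemma evSB s n : eval (SB s) [:: n] (nth false s n).
Proof.
elim: s n => [|b s IH] n /=; first by rewrite nth_nil; constructor.
elim: n => [|n IHn]; first by constructor; apply: evCST.
econstructor; first exact IHn.
by apply: evC1; [apply: evP|apply: IH].
Qed.

Definition choice (M : seq bool -> rat) (s : seq bool) (k : nat) (t : seq bool) : bool :=
  if k < size s then nth false s k else (M (rcons t true) <= M (rcons t false))%R.

Definition BSEL c s :=
  let Cnd := PComp LEB [:: PComp PSucc [:: PProj 0]; CST (size s)] in
  PComp ADD [:: PComp MUL [:: Cnd; PComp (SB s) [:: PProj 0]];
                PComp MUL [:: PComp SUB [:: CST 1; Cnd]; PComp (CHOOSE c) [:: PProj 1]]].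

Lemma evBSEL c (M : seq bool -> rat) s n (t : seq bool) :
  (forall s : seq bool, eval c [:: pickle s] (pickle (M s))) ->
  (forall t : seq bool, (0 < M t)%R) ->
  eval (BSEL c s) [:: n; pickle t] (nat_of_bool (choice M s n t)).
Proof.
move=> hc hpos.
have hC : eval (PComp LEB [:: PComp PSucc [:: PProj 0]; CST (size s)]) [:: n; pickle t]
            (nat_of_bool (n < size s)).
  by apply: evC2; [apply: evC1; [apply: evP|constructor]|apply: evCST|apply: evLEB].
apply: evC2.
- apply: evC2; [exact hC| |apply: evMUL].
  by apply: evC1; [apply: evP|apply: evSB].
- apply: evC2; [|by apply: evC1; [apply: evP|apply: evCHOOSE]|apply: evMUL].
  by apply: evC2; [apply: evCST|exact hC|apply: evSUB].
- have h := evADD.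
  rewrite /choice; case: (n < size s) => /=; rewrite ?mul1n ?mul0n ?addn0 ?subnn ?subn0 ?mul1n ?mul0n //.
  by have := h (nth false s n) 0; rewrite addn0.
Qed.

Definition G c s := PComp RC [:: PProj 1; BSEL c s].
Definition CP c s := PPrec PZero (G c s).
Definition W c s := PComp (BSEL c s) [:: PProj 0; CP c s].

Fixpoint pre (M : seq bool -> rat) s n : seq bool :=
  if n is k.+1 then rcons (pre M s k) (choice M s k (pre M s k)) else [::].
Definition wpath M s k := choice M s k (pre M s k).

Lemma evCP c (M : seq bool -> rat) (s : seq bool) n :
  (forall s : seq bool, eval c [:: pickle s] (pickle (M s))) ->
  (forall t : seq bool, (0 < M t)%R) ->
  eval (CP c s) [:: n] (pickle (pre M s n)).
Proof.
move=> hc hpos; elim: n => [|n IH]; first by constructor; constructor.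
econstructor; first exact IH.
by apply: evC2; [apply: evP|apply: evBSEL|apply: evRC].
Qed.

Lemma prefix_pre M s n : path_prefix (wpath M s) n = pre M s n.
Proof. by elim: n => [|n IH] //; rewrite /path_prefix mkseqS -/(path_prefix _ _) IH. Qed.

Lemma pre_take M s k : k <= size s -> pre M s k = take k s.
Proof.
elim: k => [|k IH] hk /=; first by rewrite take0.
by rewrite IH ?(ltnW hk) // (take_nth false hk) /choice hk.
Qed.

Lemma pre_dec M s n : supermartingale_half M -> size s <= n ->
  (M (pre M s n.+1) <= M (pre M s n))%R.
Proof.
move=> hsm hn /=; rewrite /choice ltnNge hn /=.
set t := pre M s n; have := hsm t.
move=> h2; case: (boolP (M (rcons t true) <= M (rcons t false))%R) => h /=; [|rewrite -ltNge in h]; lra.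
Qed.

Theorem lemma7' (R : realType) (M : seq bool -> rat) (y : R) (s : seq bool) :
  recursive_rat_process M ->
  (forall t : seq bool, (0 < M t)%R) ->
  supermartingale_half M ->
  (0 < y)%R ->
  (forall k : nat, k <= size s -> (ratr (M (take k s)) <= y)%R) ->
  exists w : nat -> bool,
    [/\ recursive_path w,
        path_prefix w (size s) = s &
        forall n : nat, (ratr (M (path_prefix w n)) <= y)%R].
Proof.
move=> [c hc] hpos hsm _ hy.
exists (wpath M s); split.
- exists (W c s) => n.
  by apply: evC2; [apply: evP|apply: evCP|apply: evBSEL].
- by rewrite prefix_pre pre_take // take_size.
- move=> n; rewrite prefix_pre.
  elim: n => [|n IH]; first by rewrite (pre_take M (leq0n _)); apply: hy.
  case: (leqP n.+1 (size s)) => h; first by rewrite pre_take //; apply: hy.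
  apply: le_trans IH; rewrite ler_rat; apply: pre_dec => //.
Qed.

Unset Implicit Arguments.
Theorem lemma7 (R : realType) (M : seq bool -> rat) (y : R) (s : seq bool) :
  recursive_rat_process M ->
  (forall t : seq bool, (0 < M t)%R) ->
  supermartingale_half M ->
  (0 < y)%R ->
  (forall k : nat, k <= size s -> (ratr (M (take k s)) <= y)%R) ->
  exists w : nat -> bool,
    [/\ recursive_path w,
        path_prefix w (size s) = s &
        forall n : nat, (ratr (M (path_prefix w n)) <= y)%R].
Proof. exact: lemma7'. Qed.
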